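(* There is an absolute constant $C>0$ such that the following holds. Let $\varepsilon\in(0,1)$ and let $f:\mathbb R\to\mathbb R$ be $1$-smooth with $f\ge0$, $f(0)=1$ and $f'(0)\le-\varepsilon$. Then ZerothOrder terminates and outputs an $\varepsilon$-stationary point of $f$ using at most $C(1+\log(1/\varepsilon))$ queries to the zeroth- and first-order oracle.
   Context: $f:\mathbb R\to\mathbb R$ is $1$-smooth if it is continuously differentiable and $f'$ is $1$-Lipschitz; $x$ is an $\varepsilon$-stationary point if $|f'(x)|<\varepsilon$. The oracle returns $(f(x),f'(x))$ on query $x$; values at already-queried points are reused. Subroutines (each ''returns'' its output to the caller, and a recursive call's output is returned unchanged): BinarySearch$(x_0,x_1)$: $m=(x_0+x_1)/2$; if $|f'(m)|<\varepsilon$ return $m$; if $f'(m)\le-\varepsilon$ return BinarySearch$(m,x_1)$; if $f'(m)>0$ return BinarySearch$(x_0,m)$. BinarySearchIII$(x_-,x_+)$: $m=(x_-+x_+)/2$; if $|f'(m)|<\varepsilon$ return $m$; else if $f'(m)>0$ return BinarySearch$(x_-,m)$; else if $f(m)\ge f(x_-)$ return BinarySearchIII$(x_-,m)$; else return BinarySearchIII$(m,x_+)$. BinarySearchII$(x_-,x_+)$: $m=(x_-+x_+)/2$; if $|f'(m)|<\varepsilon$ return $m$; else if $f'(m)>0$ return BinarySearch$(x_-,m)$; else if $f(m)\ge f(x_-)$ return BinarySearchIII$(x_-,m)$; else if $f(m)\le f(x_+)$ return BinarySearchIII$(m,x_+)$; else if $f(x_-)-f(m)\le\frac12(f(x_-)-f(x_+))$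 return BinarySearchII$(x_-,m)$; else return BinarySearchII$(m,x_+)$. DecreaseGap$(x_0)$: let $y=x_0+2/\varepsilon$; if $|f'(y)|<\varepsilon$ return (''stationary'', $y$); else if $f'(y)>0$ return (''stationary'', BinarySearch$(x_0,y)$); else if $f(y)\ge\frac34 f(x_0)$ return (''base'', $x_0$); else return DecreaseGap$(y)$. ZerothOrder: run DecreaseGap$(0)$. If it returns (''stationary'', $z$), output $z$. If it returns (''base'', $x_-$), set $x_+=x_-+2/\varepsilon$; if $|f'(x_-)|<\varepsilon$ output $x_-$; else if $f(x_+)\le f(x_-)$ output BinarySearchII$(x_-,x_+)$; else output BinarySearchIII$(x_-,x_+)$. *)

(* Defs.v *)
From Stdlib Require Import Reals Lra List.
Import ListNotations.
Open Scope R_scope.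

(* The algorithm ZerothOrder, run on f with oracle derivative df and
   accuracy eps, modelled with a fuel parameter (each recursive call
   consumes one unit; fuel exhaustion yields None).  The list threaded
   through the computation is the set of DISTINCT points queried so far
   (an access to f(x) or f'(x) queries x; repeated points are reused and
   not recounted).  Its length is the number of oracle queries. *)

Definition qry (s : list R) (x : R) : list R :=
  if in_dec Req_EM_T x s then s else x :: s.

Section Algo.
Variables (f df : R -> R) (eps : R).

Fixpoint BinarySearch (n : nat) (x0 x1 : R) (s : list R)
  : option (R * list R) :=
  match n with
  | O => None
  | S n =>
    let m := (x0 + x1) / 2 in
    let s := qry s m in
    if Rlt_dec (Rabs (df m)) eps then Some (m, s)
    else if Rle_dec (df m) (- eps) then BinarySearch n m x1 s
    else if Rlt_dec 0 (df m) then BinarySearch n x0 m s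
    else None (* unreachable *)
  end.

Fixpoint BinarySearchIII (n : nat) (xm xp : R) (s : list R)
  : option (R * list R) :=
  match n with
  | O => None
  | S n =>
    let m := (xm + xp) / 2 in
    let s := qry s m in
    if Rlt_dec (Rabs (df m)) eps then Some (m, s)
    else if Rlt_dec 0 (df m) then BinarySearch n xm m s
    else
      let s := qry s xm in
      if Rge_dec (f m) (f xm) then BinarySearchIII n xm m s
      else BinarySearchIII n m xp s
  end.

Fixpoint BinarySearchII (n : nat) (xm xp : R) (s : list R)
  : option (R * list R) :=
  match n with
  | O => None
  | S n =>
    let m := (xm + xp) / 2 in
    let s := qry s m in
    if Rlt_dec (Rabs (df m)) eps then Some (m, s)
    else if Rlt_dec 0 (df m) then BinarySearch n xm m s
    else
      let s := qry s xm in
      if Rge_dec (f m) (f xm) then BinarySearchIII n xm m s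
      else
        let s := qry s xp in
        if Rle_dec (f m) (f xp) then BinarySearchIII n m xp s
        else if Rle_dec (f xm - f m) (/2 * (f xm - f xp))
        then BinarySearchII n xm m s
        else BinarySearchII n m xp s
  end.

(* result: inl z = ("stationary", z), inr x = ("base", x) *)
Fixpoint DecreaseGap (n : nat) (x0 : R) (s : list R)
  : option ((R + R) * list R) :=
  match n with
  | O => None
  | S n =>
    let y := x0 + 2 / eps in
    let s := qry s y in
    if Rlt_dec (Rabs (df y)) eps then Some (inl y, s)
    else if Rlt_dec 0 (df y) then
      match BinarySearch n x0 y s with
      | Some (z, s') => Some (inl z, s')
      | None => None
      end
    else
      let s := qry s x0 in
      if Rge_dec (f y) (3/4 * f x0) then Some (inr x0, s)
      else DecreaseGap n y s
  end.

Definition ZerothOrder (n : nat) : option (R * list R) :=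
  match DecreaseGap n 0 [] with
  | None => None
  | Some (inl z, s) => Some (z, s)
  | Some (inr xm, s) =>
    let xp := xm + 2 / eps in
    let s := qry s xm in
    if Rlt_dec (Rabs (df xm)) eps then Some (xm, s)
    else
      let s := qry (qry s xm) xp in
      if Rle_dec (f xp) (f xm) then BinarySearchII n xm xp s
      else BinarySearchIII n xm xp s
  end.

End Algo.

Definition one_smooth (f df : R -> R) : Prop :=
  (forall x, derivable_pt_lim f x (df x)) /\
  (forall x, continuity_pt df x) /\
  (forall x y, Rabs (df x - df y) <= Rabs (x - y)).

(* Main.v *)
Require Import Defs.
From Stdlib Require Import Reals List.
From Stdlib Require Import Lra Lia ZArith.
Open Scope R_scope.

Lemma qry_len s x : (length (qry s x) <= S (length s))%nat.
Proof. unfold qry; destruct in_dec; simpl; lia. Qed.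

Lemma nabs a e : ~ Rabs a < e -> a <= -e \/ e <= a.
Proof.
  intros H. destruct (Rle_dec a (-e)); [left; auto|]. right.
  destruct (Rle_dec e a); auto. exfalso; apply H; apply Rabs_def1; lra.
Qed.

Lemma taylor f df : one_smooth f df -> forall x y, x < y ->
  f y <= f x + df x * (y - x) + (y - x) ^ 2.
Proof.
  intros [Hd [_ HL]] x y Hxy.
  destruct (MVT_cor2 f df x y Hxy (fun c _ => Hd c)) as [c [Hc Hcr]].
  specialize (HL c x). rewrite (Rabs_right (c - x)) in HL by lra.
  pose proof (Rle_abs (df c - df x)).
  assert (df c <= df x + (y - x)) by lra.
  assert (df c * (y - x) <= (df x + (y - x)) * (y - x)) by
    (apply Rmult_le_compat_r; lra).
  lra.
Qed.

Lemma fpos f df eps : one_smooth f df -> (forall x, 0 <= f x) -> 0 < eps ->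
  forall x, df x <= - eps -> eps ^ 2 / 4 <= f x.
Proof.
  intros Hs Hp He x Hx.
  pose proof (taylor f df Hs x (x - df x / 2) ltac:(lra)).
  pose proof (Hp (x - df x / 2)).
  replace (x - df x / 2 - x) with (- df x / 2) in H by field.
  nra.
Qed.

Lemma BS_ok f df eps : one_smooth f df -> 0 < eps ->
  forall k n x0 x1 s, (k <= n)%nat -> df x0 <= -eps -> eps <= df x1 -> x0 < x1 ->
  x1 - x0 < 2 * eps * 2 ^ k ->
  exists z s', BinarySearch df eps n x0 x1 s = Some (z, s') /\
    Rabs (df z) < eps /\ (length s' <= length s + k)%nat.
Proof.
  intros Hs He. destruct Hs as [_ [_ HL]].
  induction k; intros n x0 x1 s Hk H0 H1 Hlt Hlen.
  - exfalso. simpl in Hlen. specialize (HL x1 x0).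
    rewrite Rabs_right in HL by lra. rewrite Rabs_right in HL by lra. lra.
  - destruct n as [|n]; [lia|]. simpl. simpl in Hlen.
    pose proof (pow_lt 2 k ltac:(lra)) as Hp.
    set (m := (x0 + x1) / 2).
    pose proof (qry_len s m).
    destruct (Rlt_dec (Rabs (df m)) eps) as [Hm|Hm].
    + exists m, (qry s m). repeat split; auto. lia.
    + destruct (Rle_dec (df m) (-eps)) as [Hm2|Hm2].
      * destruct (IHk n m x1 (qry s m)) as (z & s' & E & Hz & Hl);
          try lia; try lra; try (unfold m; lra); try (rewrite ?Hmx, ?Hmx2; lra).
        exists z, s'. repeat split; auto. lia.
      * destruct (Rlt_dec 0 (df m)) as [Hm3|Hm3].
        -- assert (eps <= df m) by (destruct (nabs _ _ Hm); lra).
           destruct (IHk n x0 m (qry s m)) as (z & s' & E & Hz & Hl);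
             try lia; try lra; try (unfold m; lra); try (rewrite ?Hmx, ?Hmx2; lra).
           exists z, s'. repeat split; auto. lia.
        -- exfalso. apply Hm. apply Rabs_def1; lra.
Qed.

Lemma BS3_ok f df eps : one_smooth f df -> 0 < eps ->
  forall k n xm xp s, (k <= n)%nat -> df xm <= -eps -> f xm <= f xp -> xm < xp ->
  xp - xm < eps * 2 ^ k ->
  exists z s', BinarySearchIII f df eps n xm xp s = Some (z, s') /\
    Rabs (df z) < eps /\ (length s' <= length s + 2 * k)%nat.
Proof.
  intros Hs He.
  induction k; intros n xm xp s Hk H0 H1 Hlt Hlen.
  - exfalso. simpl in Hlen. pose proof (taylor f df Hs xm xp Hlt).
    assert (df xm * (xp - xm) <= - eps * (xp - xm)) by
      (apply Rmult_le_compat_r; lra).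
    assert ((xp - xm) ^ 2 < eps * (xp - xm)) by (simpl; nra).
    lra.
  - destruct n as [|n]; [lia|]. simpl. simpl in Hlen.
    pose proof (pow_lt 2 k ltac:(lra)) as Hp.
    set (m := (xm + xp) / 2).
    assert (Hmx : m - xm = (xp - xm) / 2) by (unfold m; field).
    assert (Hmx2 : xp - m = (xp - xm) / 2) by (unfold m; field).
    pose proof (qry_len s m).
    destruct (Rlt_dec (Rabs (df m)) eps) as [Hm|Hm].
    + exists m, (qry s m). repeat split; auto. lia.
    + destruct (Rlt_dec 0 (df m)) as [Hm3|Hm3].
      * assert (eps <= df m) by (destruct (nabs _ _ Hm); lra).
        destruct (BS_ok f df eps Hs He k n xm m (qry s m)) as (z & s' & E & Hz & Hl);
          try lia; try lra; try (unfold m; lra); try (rewrite ?Hmx, ?Hmx2; lra).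
        exists z, s'. repeat split; auto. lia.
      * assert (Hm2 : df m <= - eps) by (destruct (nabs _ _ Hm); lra).
        pose proof (qry_len (qry s m) xm).
        destruct (Rge_dec (f m) (f xm)) as [Hf|Hf].
        -- destruct (IHk n xm m (qry (qry s m) xm)) as (z & s' & E & Hz & Hl);
             try lia; try lra; try (unfold m; lra); try (rewrite ?Hmx, ?Hmx2; lra).
           exists z, s'. repeat split; auto. lia.
        -- destruct (IHk n m xp (qry (qry s m) xm)) as (z & s' & E & Hz & Hl);
             try lia; try lra; try (unfold m; lra); try (rewrite ?Hmx, ?Hmx2; lra).
           exists z, s'. repeat split; auto. lia.
Qed.

Lemma BS2_ok f df eps : one_smooth f df -> 0 < eps ->
  forall k n xm xp s, (k <= n)%nat -> df xm <= -eps -> xm < xp -> f xp <= f xm ->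
  4 * (f xm - f xp) <= eps * (xp - xm) ->
  xp - xm < eps / 2 * 2 ^ k ->
  exists z s', BinarySearchII f df eps n xm xp s = Some (z, s') /\
    Rabs (df z) < eps /\ (length s' <= length s + 3 * k)%nat.
Proof.
  intros Hs He.
  induction k; intros n xm xp s Hk H0 Hlt H1 HG Hlen.
  - exfalso. simpl in Hlen. pose proof (taylor f df Hs xm xp Hlt).
    assert (df xm * (xp - xm) <= - eps * (xp - xm)) by
      (apply Rmult_le_compat_r; lra).
    assert ((xp - xm) ^ 2 < eps / 2 * (xp - xm)) by (simpl; nra).
    nra.
  - destruct n as [|n]; [lia|]. simpl. simpl in Hlen.
    pose proof (pow_lt 2 k ltac:(lra)) as Hp.
    set (m := (xm + xp) / 2).
    assert (Hmx : m - xm = (xp - xm) / 2) by (unfold m; field).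
    assert (Hmx2 : xp - m = (xp - xm) / 2) by (unfold m; field).
    pose proof (qry_len s m).
    destruct (Rlt_dec (Rabs (df m)) eps) as [Hm|Hm].
    + exists m, (qry s m). repeat split; auto. lia.
    + destruct (Rlt_dec 0 (df m)) as [Hm3|Hm3].
      * assert (eps <= df m) by (destruct (nabs _ _ Hm); lra).
        destruct (BS_ok f df eps Hs He k n xm m (qry s m)) as (z & s' & E & Hz & Hl);
          try lia; try lra; try (unfold m; lra); try (rewrite ?Hmx, ?Hmx2; lra).
        exists z, s'. repeat split; auto. lia.
      * assert (Hm2 : df m <= - eps) by (destruct (nabs _ _ Hm); lra).
        pose proof (qry_len (qry s m) xm).
        destruct (Rge_dec (f m) (f xm)) as [Hf|Hf].
        -- destruct (BS3_ok f df eps Hs He k n xm m (qry (qry s m) xm))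
             as (z & s' & E & Hz & Hl); try lia; try lra; try (unfold m; lra); try (rewrite ?Hmx, ?Hmx2; lra).
           exists z, s'. repeat split; auto. lia.
        -- pose proof (qry_len (qry (qry s m) xm) xp).
           destruct (Rle_dec (f m) (f xp)) as [Hf2|Hf2].
           ++ destruct (BS3_ok f df eps Hs He k n m xp (qry (qry (qry s m) xm) xp))
                as (z & s' & E & Hz & Hl); try lia; try lra; try (unfold m; lra); try (rewrite ?Hmx, ?Hmx2; lra).
              exists z, s'. repeat split; auto. lia.
           ++ destruct (Rle_dec (f xm - f m) (/ 2 * (f xm - f xp))) as [Hf3|Hf3].
              ** destruct (IHk n xm m (qry (qry (qry s m) xm) xp))
                   as (z & s' & E & Hz & Hl); try lia; try lra; try (unfold m; lra); try (rewrite ?Hmx, ?Hmx2; lra).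
                 exists z, s'. repeat split; auto. lia.
              ** destruct (IHk n m xp (qry (qry (qry s m) xm) xp))
                   as (z & s' & E & Hz & Hl); try lia; try lra; try (unfold m; lra); try (rewrite ?Hmx, ?Hmx2; lra).
                 exists z, s'. repeat split; auto. lia.
Qed.

Lemma DG_ok f df eps : one_smooth f df -> (forall x, 0 <= f x) -> 0 < eps ->
  forall K j n x0 s, (j + K <= n)%nat -> df x0 <= -eps -> f x0 <= 1 ->
  f x0 < eps ^ 2 / 4 * (4/3) ^ j -> 2 / eps < 2 * eps * 2 ^ K ->
  exists r s', DecreaseGap f df eps n x0 s = Some (r, s') /\
    (length s' <= length s + 2 * j + K)%nat /\
    match r with
    | inl z => Rabs (df z) < eps
    | inr x => df x <= - eps /\ f x <= 1 /\ 3/4 * f x <= f (x + 2 / eps)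
    end.
Proof.
  intros Hs Hp He K.
  induction j; intros n x0 s Hk H0 H1 Hf HK.
  - exfalso. pose proof (fpos f df eps Hs Hp He x0 H0). simpl in Hf. lra.
  - destruct n as [|n]; [lia|]. simpl. simpl in Hf.
    set (y := x0 + 2 / eps).
    assert (Hy : y - x0 = 2 / eps) by (unfold y; ring).
    pose proof (qry_len s y).
    destruct (Rlt_dec (Rabs (df y)) eps) as [Hm|Hm].
    + exists (inl y), (qry s y). repeat split; auto. lia.
    + destruct (Rlt_dec 0 (df y)) as [Hm3|Hm3].
      * assert (eps <= df y) by (destruct (nabs _ _ Hm); lra).
        assert (0 < 2 / eps) by (apply Rdiv_lt_0_compat; lra).
        destruct (BS_ok f df eps Hs He K n x0 y (qry s y)) as (z & s' & E & Hz & Hl);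
          try lia; try lra.
        rewrite E. exists (inl z), s'. repeat split; auto. lia.
      * assert (Hm2 : df y <= - eps) by (destruct (nabs _ _ Hm); lra).
        pose proof (qry_len (qry s y) x0).
        destruct (Rge_dec (f y) (3/4 * f x0)) as [Hg|Hg].
        -- exists (inr x0), (qry (qry s y) x0). repeat split; try lia; try lra; unfold y in Hg; lra.
        -- destruct (IHj n y (qry (qry s y) x0)) as (r & s' & E & Hl & Hr);
             try lia; try lra.
           exists r, s'. repeat split; auto. lia.
Qed.
Lemma getN eps : 0 < eps < 1 ->
  exists N : nat, 4 / eps ^ 2 < (4/3) ^ N /\ INR N <= 9 + 8 * ln (1 / eps) /\ 0 < ln (1 / eps).
Proof.
  intros He.
  assert (Hie : 1 < 1 / eps) by (apply Rmult_lt_reg_r with eps; [lra|]; field_simplify; lra).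
  assert (HL : 0 < ln (1 / eps)) by (rewrite <- ln_1; apply ln_increasing; lra).
  assert (Hl2 : ln 2 < 1).
  { rewrite <- (ln_exp 1). apply ln_increasing; [lra|].
    pose proof (exp_ineq1 1 ltac:(lra)). lra. }
  assert (Hl2p : 0 < ln 2) by (rewrite <- ln_1; apply ln_increasing; lra).
  assert (HA : ln (4 / eps ^ 2) = 2 * ln 2 + 2 * ln (1 / eps)).
  { replace (4 / eps ^ 2) with ((2 * 2) * ((1/eps) * (1/eps))) by (field; lra).
    rewrite ln_mult, ln_mult, ln_mult; try lra; try nra; apply Rmult_lt_0_compat; lra. }
  assert (HB : 1/4 < ln (4/3)).
  { rewrite <- (ln_exp (1/4)). apply ln_increasing; [apply exp_pos|].
    pose proof exp_le_3 as E3.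
    replace 1 with (1/4 + 1/4 + 1/4 + 1/4) in E3 by field.
    rewrite !exp_plus in E3.
    pose proof (exp_pos (1/4)).
    destruct (Rlt_dec (exp (1/4)) (4/3)) as [h|h]; auto. exfalso.
    assert (4/3 <= exp (1/4)) by lra.
    assert (16/9 <= exp (1/4) * exp (1/4)) by nra.
    nra. }
  set (A := ln (4 / eps ^ 2)) in *. set (B := ln (4/3)) in *.
  set (x := A / B).
  assert (HxA : x * B = A) by (unfold x; field; lra).
  assert (Hx0 : 0 < x) by (unfold x; apply Rdiv_lt_0_compat; lra).
  assert (Hx4 : x <= 4 * A).
  { apply Rmult_le_reg_r with B; [lra|]. rewrite HxA. nra. }
  destruct (archimed x) as [Hu1 Hu2].
  assert (Hz : (0 < up x)%Z) by (apply lt_0_IZR; lra).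
  exists (Z.to_nat (up x)).
  assert (HN : INR (Z.to_nat (up x)) = IZR (up x)).
  { rewrite INR_IZR_INZ, Z2Nat.id; auto. lia. }
  split.
  - rewrite <- (Rpower_pow _ (4/3)) by lra. unfold Rpower. fold B. rewrite HN.
    replace (4 / eps ^ 2) with (exp A).
    + apply exp_increasing. rewrite <- HxA. apply Rmult_lt_compat_r; lra.
    + unfold A. apply exp_ln. apply Rdiv_lt_0_compat; [lra|]. apply pow_lt; lra.
  - rewrite HN. split; lra.
Qed.

Lemma fin_bound (l N : nat) (L : R) : (l <= 6 * N + 3)%nat -> INR N <= 9 + 8 * L -> 0 < L ->
  INR l <= 100 * (1 + L).
Proof.
  intros H1 H2 H3. apply le_INR in H1.
  rewrite plus_INR, mult_INR in H1. simpl in H1. lra.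
Qed.

Theorem theorem2p5 :
  exists C : R, 0 < C /\
  forall (eps : R) (f df : R -> R),
    0 < eps < 1 ->
    one_smooth f df ->
    (forall x, 0 <= f x) ->
    f 0 = 1 ->
    df 0 <= - eps ->
    exists (n : nat) (z : R) (s : list R),
      ZerothOrder f df eps n = Some (z, s) /\
      Rabs (df z) < eps /\
      INR (length s) <= C * (1 + ln (1 / eps)).
Proof.
  exists 100. split; [lra|].
  intros eps f df He Hs Hp H0 Hd0.
  destruct (getN eps He) as [N [HN1 [HN2 HL]]].
  assert (HP : (4/3) ^ N <= 2 ^ N) by (apply pow_incr; lra).
  assert (He2 : 0 < eps ^ 2) by (apply pow_lt; lra).
  assert (Q : 4 < eps ^ 2 * (4/3) ^ N).
  { apply Rmult_lt_compat_l with (r := eps ^ 2) in HN1; auto.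
    replace (eps ^ 2 * (4 / eps ^ 2)) with 4 in HN1 by (field; lra). lra. }
  assert (K2 : 2 / eps < eps / 2 * 2 ^ N).
  { assert (E : eps / 2 * 2 ^ N - 2 / eps = (eps ^ 2 * 2 ^ N - 4) / (2 * eps))
      by (field; lra).
    assert (0 < (eps ^ 2 * 2 ^ N - 4) / (2 * eps)).
    { apply Rdiv_lt_0_compat; [|lra].
      assert (eps ^ 2 * (4/3) ^ N <= eps ^ 2 * 2 ^ N) by
        (apply Rmult_le_compat_l; lra). lra. }
    lra. }
  pose proof (pow_lt 2 N ltac:(lra)).
  assert (K3 : 2 / eps < eps * 2 ^ N) by nra.
  assert (K1 : 2 / eps < 2 * eps * 2 ^ N) by nra.
  destruct (DG_ok f df eps Hs Hp (proj1 He) N N (N + N) 0 nil) as (r & s & E & Hl & Hr);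
    try lia; try lra.
  exists (N + N)%nat. unfold ZerothOrder. rewrite E. simpl length in Hl.
  destruct r as [z | xm].
  - exists z, s. repeat split; auto. apply fin_bound with N; auto. lia.
  - destruct Hr as (Hd & Hf1 & Hf2). cbv zeta.
    pose proof (qry_len s xm) as Q1.
    destruct (Rlt_dec (Rabs (df xm)) eps) as [h|h].
    + exists xm, (qry s xm). repeat split; auto. apply fin_bound with N; auto. lia.
    + pose proof (qry_len (qry s xm) xm) as Q2.
      pose proof (qry_len (qry (qry s xm) xm) (xm + 2 / eps)) as Q3.
      assert (0 < 2 / eps) by (apply Rdiv_lt_0_compat; lra).
      destruct (Rle_dec (f (xm + 2 / eps)) (f xm)) as [g|g].
      * destruct (BS2_ok f df eps Hs (proj1 He) N (N + N) xm (xm + 2 / eps)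
          (qry (qry (qry s xm) xm) (xm + 2 / eps))) as (z & s2 & E2 & Hz & Hl2);
          try lia; try lra.
        { replace (xm + 2 / eps - xm) with (2 / eps) by ring.
          replace (eps * (2 / eps)) with 2 by (field; lra). lra. }
        rewrite E2. exists z, s2. repeat split; auto. apply fin_bound with N; auto. lia.
      * destruct (BS3_ok f df eps Hs (proj1 He) N (N + N) xm (xm + 2 / eps)
          (qry (qry (qry s xm) xm) (xm + 2 / eps))) as (z & s2 & E2 & Hz & Hl2);
          try lia; try lra.
        rewrite E2. exists z, s2. repeat split; auto. apply fin_bound with N; auto. lia.
Qed.
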